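(* There exist a strictly increasing sequence $(m_n)_{n\in\mathbb N}$ of natural numbers with $m_0=0$, finite groups $G_n$ ($n\in\mathbb N$), group homomorphisms $c_n\colon \mathbb F({}^n2)\to G_n$, and actions $\sigma_n$ of $G_n$ on $I_n:=[m_n,m_{n+1})=\{k\in\mathbb N: m_n\le k<m_{n+1}\}$, each faithful and transitive, such that for all $n\in\mathbb N$: (A) $\sum_{m<n}|I_m| < |I_n|-1$, and (B) the restriction of $c_n$ to $W_n$ is injective.
   Context: For $n\in\mathbb N$, ${}^n2$ is the finite set of binary sequences of length $n$ and $\mathbb F({}^n2)$ is the free group with free generating set ${}^n2$ (so $\mathbb F({}^0 2)$ is trivial). $W_n$ denotes the set of reduced words of $\mathbb F({}^n2)$ of word length at most $n$. *)

(* Defs.v *)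
From HB Require Import structures.
From mathcomp Require Import all_boot fingroup perm.
Set Implicit Arguments. Unset Strict Implicit. Unset Printing Implicit Defensive.

(* A letter of F(^n 2): a generator (binary sequence of length n) with a flag
   [true] meaning the inverse of the generator. *)
Definition letter (n : nat) := (n.-tuple bool * bool)%type.

Definition reduced (n : nat) (w : seq (letter n)) : bool :=
  match w with
  | [::] => true
  | a :: s => path (fun a b : letter n => (a.1 != b.1) || (a.2 == b.2)) a s
  end.

Arguments reduced n w : clear implicits.
Definition W (n : nat) : pred (seq (letter n)) :=
  fun w => reduced n w && (size w <= n).

(* The value of a word under the unique homomorphism F(^n 2) -> gT
   extending the generator assignment f (universal property). *)
Definition word_eval (gT : finGroupType) (n : nat) (f : n.-tuple bool -> gT)
  (w : seq (letter n)) : gT :=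
  (\prod_(l <- w) (if l.2 then (f l.1)^-1 else f l.1))%g.
Arguments W n _ : clear implicits.

(* Main.v *)
Require Import Defs.
From HB Require Import structures.
From mathcomp Require Import all_boot fingroup perm.
From mathcomp Require Import zify.
Set Implicit Arguments. Unset Strict Implicit. Unset Printing Implicit Defensive.

Lemma perm_ext (X : finType) (f : X -> X) (s : seq X) :
  {in s &, injective f} -> exists p : {perm X}, {in s, forall x, p x = f x}.
Proof.
elim: s => [|x s IH] inj.
  by exists 1%g => y.
have inj' : {in s &, injective f}.
  by move=> a b ha hb; apply: inj; rewrite inE ?ha ?hb orbT.
have [p Hp] := IH inj'.
case: (boolP (x \in s)) => xs.
  by exists p => y; rewrite inE => /orP [/eqP -> | ys]; apply: Hp.
exists (p * tperm (p x) (f x))%g => y; rewrite inE permM => /orP [/eqP -> | ys].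
  by rewrite tpermL.
rewrite (Hp y ys) tpermD //.
- apply/eqP => E; have : p y = p x by rewrite Hp.
  by move/perm_inj => yx; move: xs; rewrite -yx ys.
- apply/eqP => E; have yx : x = y by apply: inj; rewrite ?inE ?ys ?eqxx ?orbT.
  by move: xs; rewrite yx ys.
Qed.

Fixpoint allwords (T : Type) (A : seq T) k : seq (seq T) :=
  match k with
  | 0 => [:: [::]]
  | k'.+1 => [::] :: flatten [seq [seq a :: w | w <- allwords A k'] | a <- A]
  end.

Lemma mem_allwords (T : eqType) (A : seq T) k w :
  all (mem A) w -> size w <= k -> w \in allwords A k.
Proof.
elim: k w => [|k IH] [|a w] //=.
move=> /andP [aA wA] sw; rewrite inE; apply/orP; right.
apply/flattenP; exists [seq a :: w0 | w0 <- allwords A k].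
  by apply/mapP; exists a.
by apply: map_f; apply: IH.
Qed.

Lemma size_allwords (T : eqType) (A : seq T) k w :
  w \in allwords A k -> size w <= k.
Proof.
elim: k w => [|k IH] w /=; first by rewrite inE => /eqP ->.
rewrite inE => /orP [/eqP -> // | /flattenP [s /mapP [a _ ->] /mapP [w0 h ->]]].
by rewrite /=; apply: IH.
Qed.

Definition AW n N := allwords (enum {: letter n}) N.

Lemma mem_AW n N (w : seq (letter n)) : size w <= N -> w \in AW n N.
Proof. by move=> h; apply: mem_allwords => //; apply/allP => x _; rewrite /= mem_enum. Qed.

Lemma size_nth_AW n N i : size (nth [::] (AW n N) i) <= N.
Proof.
case: (ltnP i (size (AW n N))) => h.
  by apply: (@size_allwords _ (enum {: letter n})); apply: mem_nth.
by rewrite nth_default.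
Qed.

Definition step n (g : n.-tuple bool) (w : seq (letter n)) : seq (letter n) :=
  if w is a :: w' then (if a == (g, true) then w' else (g, false) :: w)
  else [:: (g, false)].

Lemma reduced_tail n l (w : seq (letter n)) : reduced n (l :: w) -> reduced n w.
Proof. by case: w => //= b s /andP []. Qed.

Lemma step_inj n g (w1 w2 : seq (letter n)) :
  reduced n w1 -> reduced n w2 -> step g w1 = step g w2 -> w1 = w2.
Proof.
case: w1 => [|a1 w1]; case: w2 => [|a2 w2] //=.
- case: eqP => [-> | _] //= _ r2 E.
  by move: r2; rewrite -E /= eqxx.
- case: eqP => [-> | _] //= r1 _ E.
  by move: r1; rewrite E /= eqxx.
- case: eqP => [e1 | n1]; case: eqP => [e2 | n2] => r1 r2 E.
  + by rewrite e1 e2 E.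
  + by move: r1; rewrite E e1 /= eqxx.
  + by move: r2; rewrite -E e2 /= eqxx.
  + by case: E => -> ->.
Qed.

Definition enc (X : finType) (x0 : X) n N (w : seq (letter n)) : X :=
  nth x0 (enum X) (index w (AW n N)).
Definition dec (X : finType) n N (x : X) : seq (letter n) :=
  nth [::] (AW n N) (index x (enum X)).

Lemma decK (X : finType) (x0 : X) n N (w : seq (letter n)) :
  size (AW n N) <= #|X| -> size w <= N -> dec n N (enc x0 N w) = w.
Proof.
move=> hX hw; have wi := mem_AW hw.
have i1 : index w (AW n N) < size (AW n N) by rewrite index_mem.
rewrite /dec /enc index_uniq ?enum_uniq //; first by rewrite nth_index.
by rewrite -cardE; apply: leq_trans hX.
Qed.

Lemma enc_inj (X : finType) (x0 : X) n N (w1 w2 : seq (letter n)) :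
  size (AW n N) <= #|X| -> size w1 <= N -> size w2 <= N ->
  enc x0 N w1 = enc x0 N w2 -> w1 = w2.
Proof.
by move=> hX h1 h2 E; rewrite -(decK x0 hX h1) -(decK x0 hX h2) E.
Qed.

Definition Dg (X : finType) (x0 : X) n N (g : n.-tuple bool) (x : X) : bool :=
  [&& enc x0 N (dec n N x) == x, reduced n (dec n N x) &
     (size (dec n N x) < N) || (ohead (dec n N x) == Some (g, true))].
Definition Fg (X : finType) (x0 : X) n N (g : n.-tuple bool) (x : X) : X :=
  enc x0 N (step g (dec n N x)).
Definition pg (X : finType) (x0 : X) n N (g : n.-tuple bool) : {perm X} :=
  odflt 1%g [pick p : {perm X} | [forall x, Dg x0 N g x ==> (p x == Fg x0 N g x)]].

Lemma step_size n N g (w : seq (letter n)) :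
  size w <= N -> (size w < N) || (ohead w == Some (g, true)) ->
  size (step g w) <= N.
Proof.
case: w => [|a w] /= h1 /orP [h2 | h2] //.
- by rewrite /step; case: ifP => _ //=; apply: ltnW.
- rewrite /step; case: ifP => e; first by apply: ltnW.
  by move: h2 => /eqP [] /eqP; rewrite e.
Qed.

Lemma pgP (X : finType) (x0 : X) n N (g : n.-tuple bool) :
  size (AW n N) <= #|X| -> forall x, Dg x0 N g x -> pg x0 N g x = Fg x0 N g x.
Proof.
move=> hX; rewrite /pg; case: pickP => [p /forallP H | H] x Dx.
  by move: (H x); rewrite Dx => /eqP.
have inj : {in enum [pred y | Dg x0 N g y] &, injective (Fg x0 N g)}.
  move=> x1 x2; rewrite !mem_enum !inE.
  move=> /and3P [/eqP e1 r1 c1] /and3P [/eqP e2 r2 c2] E.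
  have := enc_inj hX (step_size (size_nth_AW _ _ _) c1)
                     (step_size (size_nth_AW _ _ _) c2) E.
  by move/(step_inj r1 r2) => E'; rewrite -e1 -e2 E'.
have [p Hp] := perm_ext inj.
have HF : [forall y, Dg x0 N g y ==> (p y == Fg x0 N g y)].
  apply/forallP => y; apply/implyP => Dy.
  by rewrite Hp // mem_enum inE.
by move: (H p); rewrite /= HF.
Qed.

Lemma P1 (X : finType) (x0 : X) n N (g : n.-tuple bool) (w : seq (letter n)) :
  size (AW n N) <= #|X| -> reduced n ((g, false) :: w) -> size w < N ->
  pg x0 N g (enc x0 N w) = enc x0 N ((g, false) :: w).
Proof.
move=> hX hr hs.
rewrite pgP //; last by rewrite /Dg decK ?eqxx ?(reduced_tail hr) ?hs // ltnW.
rewrite /Fg decK ?(ltnW hs) //; congr enc.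
case: w hr {hs} => [|a w] //= hr.
case: ifP => // /eqP e.
by move: hr; rewrite e /= eqxx.
Qed.

Lemma P2 (X : finType) (x0 : X) n N (g : n.-tuple bool) (w : seq (letter n)) :
  size (AW n N) <= #|X| -> reduced n ((g, true) :: w) -> size w < N ->
  ((pg x0 N g)^-1)%g (enc x0 N w) = enc x0 N ((g, true) :: w).
Proof.
move=> hX hr hs.
have E : pg x0 N g (enc x0 N ((g, true) :: w)) = enc x0 N w.
  rewrite pgP //; last by rewrite /Dg decK ?eqxx ?hr //= orbT.
  by rewrite /Fg decK //= eqxx.
by rewrite -E permK.
Qed.

Lemma eval_enc (X : finType) (x0 : X) n N :
  size (AW n N) <= #|X| -> forall w : seq (letter n), reduced n w -> size w <= N ->
  ((word_eval (fun g => (pg x0 N g)^-1)%g w)^-1)%g (enc x0 N ([::] : seq (letter n))) = enc x0 N w.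
Proof.
move=> hX; elim => [|l w IH] hr hs.
  by rewrite /word_eval big_nil invg1 perm1.
rewrite /word_eval big_cons invMg permM.
rewrite /word_eval in IH; rewrite IH ?(reduced_tail hr) //; last exact: ltnW.
case: l hr hs => g [] hr hs /=; rewrite invgK.
  by rewrite P2.
by rewrite P1.
Qed.

Definition sz n := size (AW n n).
Fixpoint m n := if n is k.+1 then m k + (m k + 2 + sz k) else 0.

Lemma dE n : m n.+1 - m n = m n + 2 + sz n.
Proof. by rewrite /= addKn. Qed.

Lemma dpos n : 0 < m n.+1 - m n.
Proof. by rewrite dE addn2 ltn0Sn ?addnS. Qed.

Definition X0 n : 'I_(m n.+1 - m n) := Ordinal (dpos n).

Lemma cardX n : size (AW n n) <= #|'I_(m n.+1 - m n)|.
Proof. rewrite card_ord dE /sz; lia. Qed.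

Lemma sum_m n : \sum_(k < n) (m k.+1 - m k) = m n.
Proof.
elim: n => [|n IH]; first by rewrite big_ord0.
by rewrite big_ord_recr /= IH dE /=; lia.
Qed.

Theorem proposition1p2 :
  exists m : nat -> nat, m 0 = 0 /\ (forall n, m n < m n.+1) /\
  exists (G : nat -> finGroupType)
         (c : forall n, n.-tuple bool -> G n)
         (sigma : forall n, G n -> {perm 'I_(m n.+1 - m n)}),
  forall n,
    [/\ {morph sigma n : x y / (x * y)%g},
        injective (sigma n),
        (forall i j : 'I_(m n.+1 - m n), exists g, sigma n g i = j),
        \sum_(k < n) (m k.+1 - m k) < (m n.+1 - m n) - 1
      & {in W n &, injective (word_eval (c n))}].
Proof.
exists m; split; first by [].
split; first by move=> n /=; lia.
exists (fun n => {perm 'I_(m n.+1 - m n)} : finGroupType).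
exists (fun n g => (pg (X0 n) n g)^-1)%g.
exists (fun n x => x).
move=> n; split => //.
- by move=> i j; exists (tperm i j); rewrite tpermL.
- by rewrite sum_m dE; lia.
- move=> w1 w2 /andP [r1 s1] /andP [r2 s2] E.
  apply: (@enc_inj _ (X0 n) n n w1 w2 (cardX n) s1 s2).
  by rewrite -(eval_enc (X0 n) (cardX n) r1 s1) -(eval_enc (X0 n) (cardX n) r2 s2) E.
Qed.
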